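(* Let $k$ be an even positive integer. Then $S_3(k;2)=S_{3,2}(k;2)=2k-3$.
   Context: Let $k,r$ be positive integers with $r\mid k$. A solution to $\mathcal{E}$ is a $k$-tuple $(x_1,\dots,x_k)$ of positive integers (not necessarily distinct) with $\sum_{i=1}^{k-1}x_i=x_k$; it lies in $[1,n]$ if all $x_i\in\{1,\dots,n\}$. Given a coloring $\chi$ of $[1,n]$ with colors in $\{0,1,\dots,r-1\}$ (viewed as integers), a solution is $r$-zero-sum if $\sum_{i=1}^k\chi(x_i)\equiv 0\pmod r$. $S_3(k;r)$ denotes the least positive integer $n$ such that every coloring $\chi:[1,n]\to\{0,1,\dots,r-1\}$ admits an $r$-zero-sum solution to $\mathcal{E}$ in $[1,n]$. $S_{3,2}(k;r)$ denotes the least positive integer $n$ such that every coloring $\chi:[1,n]\to\{0,1\}$ admits an $r$-zero-sum solution to $\mathcal{E}$ in $[1,n]$. *)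

(* Defs.v *)
From mathcomp Require Import all_boot.
Set Implicit Arguments.
Unset Strict Implicit.
Unset Printing Implicit Defensive.

(* A k-tuple (x_1,...,x_k) is encoded as x : nat -> nat with x_i := x (i-1),
   i.e. indices 0..k-1; only the values at 0..k-1 matter. *)
Definition solution_in (k n : nat) (x : nat -> nat) : Prop :=
  (forall i, i < k -> 1 <= x i <= n) /\ \sum_(i < k.-1) x i = x k.-1.

Definition zero_sum (k r : nat) (chi : nat -> nat) (x : nat -> nat) : Prop :=
  \sum_(i < k) chi (x i) = 0 %[mod r].

Definition every_coloring_has_zs (k r c n : nat) : Prop :=
  forall chi : nat -> nat, (forall y, 1 <= y <= n -> chi y < c) ->
  exists x, solution_in k n x /\ zero_sum k r chi x.

Definition least_pos (P : nat -> Prop) (n : nat) : Prop :=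
  0 < n /\ P n /\ forall m, 0 < m -> m < n -> ~ P m.

Definition S3_eq (k r n : nat) : Prop := least_pos (every_coloring_has_zs k r r) n.
Definition S32_eq (k r n : nat) : Prop := least_pos (every_coloring_has_zs k r 2) n.

(* Main.v *)
Require Import Defs.
From mathcomp Require Import all_boot.
From mathcomp Require Import zify.

Lemma upper (m c : nat) (hm : ~~ odd m) : every_coloring_has_zs m.+2 2 c (2 * m.+2 - 3).
Proof.
move=> chi _.
have hn : 2 * m.+2 - 3 = (2 * m).+1 by lia.
rewrite hn.
pose A := fun i => if i == m.+1 then m.+1 else 1.
pose B := fun i => if i == m.+1 then (2*m).+1 else if i == 0 then m.+1 else 1.
pose C := fun i => if i == m.+1 then (2*m).+1 else if i == m then 1 else 2.
have sA : \sum_(i < m.+1) A i = m.+1.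
  rewrite (eq_bigr (fun _ => 1)); last by move=> [i hi] _; rewrite /A /=; have -> : (i == m.+1) = false by lia.
  by rewrite sum_nat_const card_ord muln1.
have sB : \sum_(i < m.+1) B i = (2*m).+1.
  rewrite big_ord_recl /B /=.
  rewrite (eq_bigr (fun _ => 1)); last by move=> [i hi] _; rewrite /bump /= add1n; have -> : (i.+1 == m.+1) = false by lia.
  rewrite sum_nat_const card_ord muln1; lia.
have sC : \sum_(i < m.+1) C i = (2*m).+1.
  rewrite big_ord_recr /C /=.
  rewrite (eq_bigr (fun _ => 2)); last by move=> [i hi] _ /=; rewrite (_ : (i == m.+1) = false); last lia; rewrite (_ : (i == m) = false) //; lia.
  rewrite sum_nat_const card_ord eqxx; rewrite (_ : (m == m.+1) = false); last lia. lia.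
have cA : \sum_(i < m.+2) chi (A i) = m.+1 * chi 1 + chi m.+1.
  rewrite big_ord_recr /= {2}/A eqxx.
  rewrite (eq_bigr (fun _ => chi 1)); last by move=> [i hi] _; rewrite /A /=; have -> : (i == m.+1) = false by lia.
  by rewrite sum_nat_const card_ord.
have cB : \sum_(i < m.+2) chi (B i) = chi m.+1 + m * chi 1 + chi (2*m).+1.
  rewrite big_ord_recr /= {2}/B eqxx big_ord_recl /B /=.
  rewrite (eq_bigr (fun _ => chi 1)); last by move=> [i hi] _ /=; rewrite /bump /=; have -> : ((0 <= i) + i == m.+1) = false by lia.
  by rewrite sum_nat_const card_ord.
have cC : \sum_(i < m.+2) chi (C i) = m * chi 2 + chi 1 + chi (2*m).+1.
  rewrite big_ord_recr /= {2}/C eqxx big_ord_recr /C /=.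
  rewrite (eq_bigr (fun _ => chi 2)); last by move=> [i hi] _ /=; rewrite (_ : (i == m.+1) = false); last lia; rewrite (_ : (i == m) = false) //; lia.
  rewrite sum_nat_const card_ord eqxx; rewrite (_ : (m == m.+1) = false); last lia. by [].
have solA : solution_in m.+2 (2*m).+1 A.
  split; last by rewrite sA /A eqxx.
  move=> i hi; rewrite /A; case: ifP => _; lia.
have solB : solution_in m.+2 (2*m).+1 B.
  split; last by rewrite sB /B eqxx.
  move=> i hi; rewrite /B; case: ifP => _; try lia; case: ifP => _; lia.
have solC : solution_in m.+2 (2*m).+1 C.
  split; last by rewrite sC /C eqxx.
  move=> i hi; rewrite /C; case: ifP => h1; try lia; case: ifP => h2; move/eqP: h1; try move/eqP: h2; lia.
rewrite /zero_sum.
have par : odd (m.+1 * chi 1 + chi m.+1) (+) odd (chi m.+1 + m * chi 1 + chi (2*m).+1)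
           (+) odd (m * chi 2 + chi 1 + chi (2*m).+1) = false.
  rewrite -!oddD.
  have -> : m.+1 * chi 1 + chi m.+1 + (chi m.+1 + m * chi 1 + chi (2 * m).+1) +
    (m * chi 2 + chi 1 + chi (2 * m).+1) = 2 * ((m.+1) * chi 1 + chi m.+1 + chi (2*m).+1) + m * chi 2 by lia.
  by rewrite oddD oddM /= oddM (negbTE hm).
case oA: (odd (m.+1 * chi 1 + chi m.+1)).
  case oB: (odd (chi m.+1 + m * chi 1 + chi (2*m).+1)).
    exists C; split => //; rewrite cC !modn2; rewrite oA oB /= in par.
    by rewrite par.
  by exists B; split => //; rewrite cB !modn2 oB.
by exists A; split => //; rewrite cA !modn2 oA.
Qed.

Lemma lower (m c n : nat) (hm : ~~ odd m) (hc : 1 < c) (hn : n <= 2 * m) : ~ every_coloring_has_zs m.+2 2 c n.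
Proof.
move=> H.
have hcol : forall y, 1 <= y <= n -> (if y <= m then 1 else 0) < c by move=> y _; case: ifP; lia.
have [x [[hb hs] hz]] := H (fun y => if y <= m then 1 else 0) hcol.
have hsum := hs; simpl in hsum.
have small : forall j : 'I_m.+1, x j <= m.
  move=> j; apply/negP => /negP; rewrite -ltnNge => hj.
  have := hb m.+1 (ltnSn _); rewrite -hs (bigD1 j) //= => /andP [_ h2].
  have : \sum_(i < m.+1 | i != j) 1 <= \sum_(i < m.+1 | i != j) x i.
    apply: leq_sum => i _; have := hb i (ltnW (ltn_ord i) : i < m.+2); lia.
  rewrite sum_nat_const cardC1 card_ord muln1 /= => h3; have := leq_add hj h3; move: h2; set S := \sum_(i < m.+1 | i != j) x i; lia.
move: hz; rewrite /zero_sum big_ord_recr /=.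
rewrite (eq_bigr (fun _ => 1)); last by move=> i _; rewrite small.
rewrite sum_nat_const card_ord muln1.
have hl : m.+1 <= x m.+1.
  have : \sum_(i < m.+1) 1 <= \sum_(i < m.+1) x i.
    apply: leq_sum => i _; have := hb i (ltnW (ltn_ord i) : i < m.+2); lia.
  by rewrite sum_nat_const card_ord muln1 hsum.
rewrite (_ : (x m.+1 <= m) = false); last lia.
rewrite addn0 !modn2 /=; move: hm; clear; case: (odd m) => //.
Qed.

Theorem proposition3 (k : nat) (hk : 0 < k) (heven : ~~ odd k) :
  S3_eq k 2 (2 * k - 3) /\ S32_eq k 2 (2 * k - 3).
Proof.
case: k hk heven => [|[|m]] //= _; rewrite negbK => hm.
have key : forall c, 1 < c -> least_pos (every_coloring_has_zs m.+2 2 c) (2 * m.+2 - 3).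
  move=> c hc; split; first lia; split; first exact: upper.
  move=> n hn0 hn; apply: lower => //; lia.
by split; apply: key.
Qed.
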